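(* Let $n\ge2$ and $\Delta\subset B_n$ a proper ideal. Then for all $0\le i\le\lfloor\frac{n-1}{2}\rfloor$, $$g_i(\mathrm{Bier}(B_n,\Delta))=f_i(\Delta)-f_{n-i}(\Delta).$$
   Context: $B_n$ is the Boolean lattice of subsets of $[1,n]$. A proper ideal $\Delta\subset B_n$ is a nonempty family of subsets of $[1,n]$ closed under taking subsets with $[1,n]\notin\Delta$; $f_i(\Delta)$ is the number of sets of cardinality $i$ in $\Delta$. The Bier sphere $\mathrm{Bier}(B_n,\Delta)$ is the simplicial complex whose faces are the pairs $(B,C)$ with $B\subsetneq C\subseteq[1,n]$, $B\in\Delta$, $C\notin\Delta$, with $(B',C')$ a face of $(B,C)$ iff $B'\subseteq B$ and $C\subseteq C'$; the face $(B,C)$ has $|B|+n-|C|$ vertices, and all facets have $n-1$ vertices. For such a complex $\Gamma$, $f_j(\Gamma)$ is the number of faces with $j$ vertices ($f_0=1$), $h_i(\Gamma):=\sum_{j=0}^{n-1}(-1)^{i+j}\binom{n-1-j}{n-1-i}f_j(\Gamma)$ for $0\le i\le n-1$ ($h_i:=0$ otherwise), and $g_i(\Gamma):=h_i(\Gamma)-h_{i-1}(\Gamma)$ for $0\le i\le\lfloor\frac{n-1}2\rfloor$. *)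

(* Defs.v *)
From mathcomp Require Import all_boot all_order all_algebra.
Set Implicit Arguments. Unset Strict Implicit. Unset Printing Implicit Defensive.
Import GRing.Theory Num.Theory.

(* B_n = subsets of [1,n], modelled as {set 'I_n}. *)

Definition is_proper_ideal (n : nat) (D : {set {set 'I_n}}) : Prop :=
  [/\ D != set0,
      (forall A B : {set 'I_n}, A \subset B -> B \in D -> A \in D)
    & [set: 'I_n] \notin D].

Definition fIdeal (n : nat) (D : {set {set 'I_n}}) (i : nat) : nat :=
  #|[set A in D | #|A| == i]|.

(* Faces of Bier(B_n, Delta): pairs (B, C), B proper subset of C,
   B in Delta, C not in Delta. *)
Definition bier_face (n : nat) (D : {set {set 'I_n}})
    (p : {set 'I_n} * {set 'I_n}) : bool :=
  [&& p.1 \proper p.2, p.1 \in D & p.2 \notin D].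

Definition bier_nverts (n : nat) (p : {set 'I_n} * {set 'I_n}) : nat :=
  #|p.1| + (n - #|p.2|).


Definition fBier (n : nat) (D : {set {set 'I_n}}) (j : nat) : nat :=
  #|[set p | bier_face D p & @bier_nverts n p == j]|.

Definition hBier (n : nat) (D : {set {set 'I_n}}) (i : nat) : int :=
  if i <= n - 1 then
    (\sum_(0 <= j < n) ((-1) ^+ (i + j) * ('C(n - 1 - j, n - 1 - i))%:Z
                         * (fBier D j)%:Z))%R
  else 0%R.

Definition gBier (n : nat) (D : {set {set 'I_n}}) (i : nat) : int :=
  (hBier D i - (if i is k.+1 then hBier D k else 0))%R.

(* Main.v *)
Require Import Defs.
From mathcomp Require Import all_boot all_order all_algebra.
From mathcomp Require Import zify.
Import GRing.Theory Num.Theory.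
Open Scope ring_scope.

Definition Y : {poly int} := 'X - 1.
Definition Gp (m : nat) : {poly int} := \sum_(l < m.+1) Y ^+ (m - l - 1) *+ 'C(m, l).

Lemma Gp_eq m : Gp m = 1 + \sum_(k < m) 'X ^+ k.
Proof.
rewrite /Gp big_ord_recr /= subnn binn sub0n expr0 addrC; congr (_ + _).
have hY : Y != 0 by rewrite /Y -polyC1 polyXsubC_eq0.
apply: (mulfI hY); rewrite -subrX1 mulr_sumr.
have -> : ('X : {poly int}) = Y + 1 by rewrite /Y subrK.
rewrite exprDn big_ord_recr /= subnn expr0 expr1n mul1r binn addrK.
apply: eq_bigr => l _; rewrite expr1n mulr1 mulrnAr -exprS; congr (_ ^+ _ *+ _).
have := ltn_ord l; lia.
Qed.

Lemma coefY m k : (Y ^+ m)`_k = (-1) ^+ (m - k) *+ 'C(m, k).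
Proof.
rewrite /Y addrC exprDn coef_sum.
have [hk|hk] := ltnP m k.
  rewrite bin_small // mulr0n big1 // => l _.
  rewrite -polyCN -rmorphXn /= coefMn coefCM coefXn.
  have : (l <= m)%N by rewrite -ltnS.
  case: eqP => [E|_] hl; first lia.
  by rewrite mulr0 mul0rn.
rewrite -ltnS in hk; rewrite (bigD1 (Ordinal hk)) //= big1 ?addr0.
  by rewrite -polyCN -rmorphXn /= coefMn coefCM coefXn eqxx mulr1.
move=> l hl; rewrite -polyCN -rmorphXn /= coefMn coefCM coefXn.
case: eqP => [E|]; last by rewrite mulr0 mul0rn.
have El : l = Ordinal hk by apply: val_inj; rewrite /= E.
by rewrite El eqxx in hl.
Qed.
Lemma sum_pick (V : zmodType) (m k : nat) (F : nat -> V) : (k < m)%N ->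
  \sum_(j < m) (if k == j then F j else 0) = F k.
Proof.
move=> hk; rewrite (bigD1 (Ordinal hk)) //= eqxx big1 ?addr0 // => j hj.
case: eqP => // E; move: hj; suff -> : j = Ordinal hk by rewrite eqxx.
by apply: val_inj; rewrite /= E.
Qed.

Lemma sub_sum (T : finType) (M : {set T}) (V : zmodType) (F : nat -> V) :
  \sum_(S : {set T} | S \subset M) F #|S| = \sum_(l < #|M|.+1) F l *+ 'C(#|M|, l).
Proof.
transitivity (\sum_(S : {set T} | S \subset M) \sum_(l < #|M|.+1)
   (if #|S| == l then F l else 0)).
  apply: eq_bigr => S sSM; rewrite sum_pick //; rewrite ltnS; exact: subset_leq_card.
rewrite exchange_big /=; apply: eq_bigr => l _.
rewrite -big_mkcondr /= (eq_bigr (fun _ => F l)); last by move=> S /andP[_ /eqP<-].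
rewrite sumr_const -cards_draws; congr (_ *+ _); apply: eq_card => S; rewrite !inE.
by [].
Qed.

Lemma coef_geom m k : (\sum_(j < m) ('X^j : {poly int}))`_k = (k < m)%:R.
Proof.
rewrite coef_sum; under eq_bigr do rewrite coefXn.
case: (ltnP k m) => h.
  transitivity (\sum_(j < m) (if k == j then (1:int) else 0)).
    by apply: eq_bigr => j _; case: eqP.
  by rewrite (@sum_pick _ _ _ (fun _ => (1 : int)) h).
by rewrite big1 // => j _; case: eqP => // E; have := ltn_ord j; lia.
Qed.

Lemma coef_Gp m k : (Gp m)`_k = (k == 0)%:R + (k < m)%:R.
Proof. by rewrite Gp_eq coefD coef_geom coef1. Qed.

Lemma super_sum n (A : {set 'I_n}) (V : zmodType) (F : nat -> V) :
  \sum_(C : {set 'I_n} | A \subset C) F (#|C| - #|A|)%N =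
  \sum_(l < (n - #|A|).+1) F (n - #|A| - l)%N *+ 'C(n - #|A|, l).
Proof.
rewrite (reindex_inj (@setC_inj _)) /=.
under eq_bigl => S do rewrite subsetC.
have hc : #|~: A| = (n - #|A|)%N by rewrite cardsCs setCK card_ord.
rewrite -hc -(@sub_sum _ (~: A) _ (fun l => F (#|~:A| - l)%N)).
apply: eq_bigr => S _; congr F.
have := cardsCs (~: S); rewrite setCK card_ord => ->.
by rewrite hc subnAC.
Qed.

Definition hp n (D : {set {set 'I_n}}) : {poly int} :=
  \sum_(j < n) (fBier D j)%:Z *: Y ^+ (n - 1 - j).

Arguments hp {n}.

Lemma hB_coef n (D : {set {set 'I_n}}) i : (i <= n - 1)%N ->
  hBier D i = (hp D)`_(n - 1 - i).
Proof.
move=> hi; rewrite /hBier hi /hp coef_sum big_mkord; apply: eq_bigr => j _.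
rewrite coefZ coefY.
have hj := ltn_ord j.
case: (leqP j i) => h.
  have -> : (n - 1 - j - (n - 1 - i))%N = (i - j)%N by lia.
  have -> : (i + j)%N = (i - j + j * 2)%N by lia.
  rewrite exprD exprM sqrr_sign mulr1 -mulr_natr natz.
  by rewrite mulrC.
rewrite bin_small; last by lia.
by rewrite mulr0 mul0r mulr0n mulr0.
Qed.

Lemma hp_eq n (D : {set {set 'I_n}}) : is_proper_ideal D ->
  hp D = \sum_(A in D) (Gp (n - #|A|) - Gp #|A|).
Proof.
case=> _ hdown _.
pose w (p : {set 'I_n} * {set 'I_n}) := Y ^+ (#|p.2| - #|p.1| - 1).
have face_lt p : bier_face D p ->
    (bier_nverts p < n)%N /\ (n - 1 - bier_nverts p = #|p.2| - #|p.1| - 1)%N.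
  move=> /and3P[pr _ _]; have := proper_card pr.
  have := subset_leq_card (subsetT p.2); rewrite cardsT card_ord /bier_nverts.
  move=> h1 h2; split; lia.
have step1 : hp D = \sum_(p | bier_face D p) w p.
  rewrite /hp.
  transitivity (\sum_(j < n) \sum_(p | bier_face D p)
      (if bier_nverts p == j then Y ^+ (n - 1 - j) else 0)).
    apply: eq_bigr => j _; rewrite -big_mkcondr /= -natz scaler_nat -sumr_const.
    by apply: eq_bigl => p; rewrite inE.
  rewrite exchange_big; apply: eq_bigr => p hp.
  have [h1 h2] := face_lt p hp.
  by rewrite (@sum_pick _ _ _ (fun j => Y ^+ (n - 1 - j)) h1) h2.
have step2 : \sum_(p : {set 'I_n} * {set 'I_n} | (p.1 \subset p.2) && (p.1 \in D)) w p =
    \sum_(p | bier_face D p) w p + \sum_(p : {set 'I_n} * {set 'I_n} | (p.1 \subset p.2) && (p.2 \in D)) w p.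
  rewrite (bigID (fun p : {set 'I_n} * {set 'I_n} => p.2 \in D)) /= addrC; congr (_ + _); apply: eq_bigl => p.
    rewrite /bier_face properE.
    case hs: (p.1 \subset p.2) => //=.
    case h1: (p.1 \in D); case h2: (p.2 \in D); rewrite /= ?andbF ?andbT //.
    apply/esym/negP => h3.
    have E : p.1 = p.2 by apply/eqP; rewrite eqEsubset hs h3.
    by rewrite E h2 in h1.
  case hs: (p.1 \subset p.2) => //=.
  case h2: (p.2 \in D); rewrite ?andbF ?andbT //.
  exact: hdown hs h2.
have step3 : \sum_(p : {set 'I_n} * {set 'I_n} | (p.1 \subset p.2) && (p.1 \in D)) w p =
    \sum_(A in D) Gp (n - #|A|).
  rewrite (eq_bigl (fun p : {set 'I_n} * {set 'I_n} => (p.1 \in D) && (p.1 \subset p.2))); last first.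
    by move=> p; rewrite andbC.
  transitivity (\sum_(A : {set 'I_n} | A \in D) \sum_(C : {set 'I_n} | A \subset C) w (A, C)).
    by rewrite pair_big_dep; apply: eq_bigr => -[a b].
  apply: eq_bigr => A _.
  rewrite /w /= (@super_sum n A _ (fun m => Y ^+ (m - 1))).
  by rewrite /Gp; apply: eq_bigr => l _; rewrite subnAC.
have step4 : \sum_(p : {set 'I_n} * {set 'I_n} | (p.1 \subset p.2) && (p.2 \in D)) w p =
    \sum_(A in D) Gp #|A|.
  have hinj : injective (fun p : {set 'I_n} * {set 'I_n} => (p.2, p.1)).
    by move=> [a b] [c d] /= [-> ->].
  rewrite (reindex_inj hinj) /=.
  rewrite (eq_bigl (fun p : {set 'I_n} * {set 'I_n} => (p.1 \in D) && (p.2 \subset p.1))); last first.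
    by move=> p; rewrite andbC.
  transitivity (\sum_(C : {set 'I_n} | C \in D) \sum_(B : {set 'I_n} | B \subset C) w (B, C)).
    by rewrite pair_big_dep; apply: eq_bigr => -[a b].
  apply: eq_bigr => C _.
  rewrite /w /= (@sub_sum _ C _ (fun m => Y ^+ (#|C| - m - 1))).
  by rewrite /Gp.
rewrite step1 sumrB -step3 -step4 step2 addrK.
done.
Qed.
Lemma perA n a i : (a < n)%N -> (i <= n - 1)%N ->
 ((n-1-i < n-a)%N%:R - (n-1-i < a)%N%:R : int) - (if i is k.+1 then (n-1-k < n-a)%N%:R - (n-1-k < a)%N%:R else 0)
 = (a == i)%:R - (a == n - i)%N%:R.
Proof.
move=> ha hi; rewrite !natz.
case: i hi => [|k] hi /=; lia.
Qed.

Close Scope ring_scope.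

Theorem theorem9 (n : nat) (D : {set {set 'I_n}}) (i : nat) :
  2 <= n -> is_proper_ideal D -> i <= (n - 1)./2 ->
  gBier D i = ((fIdeal D i)%:Z - (fIdeal D (n - i))%:Z)%R.
Proof.
Open Scope ring_scope.
move=> hn hD hi.
have hi1 : (i <= n - 1)%N by lia.
have hc k : (k <= n - 1)%N -> hBier D k =
    \sum_(A in D) ((n - 1 - k < n - #|A|)%N%:R - (n - 1 - k < #|A|)%N%:R).
  move=> hk; rewrite hB_coef // hp_eq // coef_sum; apply: eq_bigr => A _.
  by rewrite coefB !coef_Gp opprD addrACA subrr add0r.
have hcard A : A \in D -> (#|A| < n)%N.
  case: hD => _ _ hT hA; rewrite ltn_neqAle.
  have := subset_leq_card (subsetT A); rewrite cardsT card_ord => ->; rewrite andbT.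
  apply/eqP => E.
  have EA : A = [set: 'I_n].
    by apply/eqP; rewrite eqEcard subsetT cardsT card_ord E leqnn.
  by rewrite -EA hA in hT.
have hf k : (fIdeal D k)%:Z = \sum_(A in D) (#|A| == k)%:R.
  rewrite /fIdeal -natz -sumr_const big_mkcond [RHS]big_mkcond.
  apply: eq_bigr => A _; rewrite inE.
  by case: (A \in D); case: (#|A| == k).
rewrite /gBier (hc i hi1).
transitivity (\sum_(A in D) (((n - 1 - i < n - #|A|)%N%:R - (n - 1 - i < #|A|)%N%:R)
   - (if i is k.+1 then (n-1-k < n-#|A|)%N%:R - (n-1-k < #|A|)%N%:R else (0:int)))).
  rewrite [RHS]sumrB; congr (_ - _); case: i hi hi1 => [|k] hi hi1.
    by rewrite big1.
  by rewrite hc //; lia.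
rewrite !hf -sumrB; apply: eq_bigr => A hA.
exact: perA (hcard A hA) hi1.
Qed.
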